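(* Let $\mathcal{A}$ and $\mathcal{B}$ be inequivalent sharp qubit observables given by unit vectors $\vec a,\vec b\in\mathbb{R}^3$ (so $\vec a\neq\pm\vec b$), and let $\theta_{\vec a\vec b}$ be the angle between $\vec a$ and $\vec b$. Then unambiguous discrimination of $\mathcal{A}$ and $\mathcal{B}$ is possible in four shots, with success probability $P_{\rm succ}\ge\sin^2\theta_{\vec a\vec b}$ for every a priori distribution $(\eta,1-\eta)$. That is, there exist a state $\varrho$ on $(\mathbb{C}^2)^{\otimes 4}$ and a partition of $\Omega^4$ ($\Omega=\{\omega_1,\omega_2\}$) into disjoint subsets $R_{\mathcal{A}},R_{\mathcal{B}},R_?$, each invariant under swapping the labels $\omega_1\leftrightarrow\omega_2$ in all four entries, such that $p^{\mathcal{B}}_\varrho(\omega)=0$ for all $\omega\in R_{\mathcal{A}}$, $p^{\mathcal{A}}_\varrho(\omega)=0$ for all $\omega\in R_{\mathcal{B}}$, and $\eta\,p^{\mathcal{A}}_\varrho(R_{\mathcal{A}})+(1-\eta)\,p^{\mathcal{B}}_\varrho(R_{\mathcal{B}})\ge\sin^2\theta_{\vec a\vec b}$ for all $\eta\in[0,1]$ (in particular $p^{\mathcal{A}}_\varrho(R_{\mathcal{A}})>0$ and $p^{\mathcal{B}}_\varrho(R_{\mathcal{B}})>0$).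
   Context: A sharp qubit observable given by a unit vector $\vec a\in\mathbb{R}^3$ has outcome set $\Omega=\{\omega_1,\omega_2\}$ and effects $\mathcal{A}_1=\frac12(I+\vec a\cdot\vec\sigma)$, $\mathcal{A}_2=\frac12(I-\vec a\cdot\vec\sigma)$ on $\mathbb{C}^2$ ($\vec\sigma$ the Pauli matrices); two such observables are equivalent if they coincide up to relabeling outcomes, i.e. $\vec b=\pm\vec a$. For a state $\varrho$ on $(\mathbb{C}^2)^{\otimes 4}$ and $\omega=(\omega_{j_1},\ldots,\omega_{j_4})\in\Omega^4$, $p^{\mathcal{A}}_\varrho(\omega)=\mathrm{tr}[\varrho\,\mathcal{A}_{j_1}\otimes\cdots\otimes\mathcal{A}_{j_4}]$, and $p^{\mathcal{A}}_\varrho(R)=\sum_{\omega\in R}p^{\mathcal{A}}_\varrho(\omega)$. The unknown apparatus (either $\mathcal{A}$ or $\mathcal{B}$, with a priori probabilities $\eta$ and $1-\eta$, outcome labels unknown) is applied to each of the four subsystems; results in $R_{\mathcal{A}}$ (resp. $R_{\mathcal{B}}$) lead to the error-free conclusion $\mathcal{A}$ (resp. $\mathcal{B}$), results in $R_?$ are inconclusive. *)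

(* Defs.v *)
From HB Require Import structures.
From mathcomp Require Import all_boot all_order all_algebra.
From mathcomp Require Import complex mxtens.
From mathcomp Require Import reals trigo.
Set Implicit Arguments. Unset Strict Implicit. Unset Printing Implicit Defensive.
Import Order.TTheory GRing.Theory Num.Theory.
Local Open Scope ring_scope.
Local Open Scope complex_scope.

Section Qubit.
Variable R : realType.
Local Notation C := R[i].

Definition dot3 (a b : 'rV[R]_3) : R := \sum_(k < 3) a 0 k * b 0 k.
Definition unit3 (a : 'rV[R]_3) : Prop := dot3 a a = 1.

Definition angle3 (a b : 'rV[R]_3) : R := acos (dot3 a b).

Definition pauliX : 'M[C]_2 := \matrix_(i, j) (if i == j then 0 else 1).
Definition pauliY : 'M[C]_2 :=
  \matrix_(i, j) (if i == j then 0 else if i == 0 then - 'i else 'i).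
Definition pauliZ : 'M[C]_2 :=
  \matrix_(i, j) (if i == j then (if i == 0 then 1 else -1) else 0).
Definition dot_sigma (a : 'rV[R]_3) : 'M[C]_2 :=
  ((a 0 0)%:C *: pauliX + (a 0 1)%:C *: pauliY + (a 0 2%:R)%:C *: pauliZ).

(* the outcome set Omega = {omega_1, omega_2} is 'I_2 (ord0 = omega_1) *)
Definition effect (a : 'rV[R]_3) (j : 'I_2) : 'M[C]_2 :=
  2%:R^-1 *: (1%:M + (if j == 0 then 1 else -1) *: dot_sigma a).

Definition dim4 : nat := (2 * (2 * (2 * 2)))%N.
Definition outcome4 := {ffun 'I_4 -> 'I_2}.

Definition effect4 (a : 'rV[R]_3) (w : outcome4) : 'M[C]_dim4 :=
  tensmx (effect a (w 0)) (tensmx (effect a (w 1))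
    (tensmx (effect a (w 2%:R)) (effect a (w 3%:R)))).

Definition adjmx {m n : nat} (M : 'M[C]_(m, n)) : 'M[C]_(n, m) :=
  map_mx (fun z : C => z^*) M^T.
Definition psd {n : nat} (rho : 'M[C]_n) : Prop :=
  forall v : 'cV[C]_n, 0 <= (adjmx v *m rho *m v) 0 0.
Definition density4 (rho : 'M[C]_dim4) : Prop := psd rho /\ \tr rho = 1.

Definition prob (a : 'rV[R]_3) (rho : 'M[C]_dim4) (w : outcome4) : C :=
  \tr (rho *m effect4 a w).
Definition probset (a : 'rV[R]_3) (rho : 'M[C]_dim4) (S : {set outcome4}) : C :=
  \sum_(w in S) prob a rho w.

Definition swap4 (w : outcome4) : outcome4 := [ffun k => rev_ord (w k)].
Definition swap_invariant (S : {set outcome4}) : Prop :=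
  forall w, w \in S -> swap4 w \in S.

End Qubit.

(* Main.v *)
Require Import Defs.
From HB Require Import structures.
From mathcomp Require Import all_boot all_order all_algebra.
From mathcomp Require Import complex mxtens.
From mathcomp Require Import reals trigo.
Import Order.TTheory GRing.Theory Num.Theory.
Local Open Scope ring_scope.
Local Open Scope complex_scope.
From mathcomp Require Import ring lra.

Section S.
Variable R : realType.
Local Notation C := R[i].
Definition sg (j : 'I_2) : R := if j == 0 then 1 else -1.
Lemma effectE (n : 'rV[R]_3) x (i j : 'I_2) : effect n x i j =
  Complex (2^-1 * ((i==j)%:R + sg x * (if i==j then (if i==0 then n 0 2%:R else - n 0 2%:R) else n 0 0)))
          (2^-1 * sg x * (if i==j then 0 else if i==0 then - n 0 1 else n 0 1)).
Proof.
rewrite /effect /dot_sigma /pauliX /pauliY /pauliZ !mxE.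

have -> : (2%:R^-1 : C) = (2^-1)%:C by rewrite fmorphV rmorph_nat.

rewrite /sg; case: x => [[|[|//]] ?]; case: i => [[|[|//]] ?]; case: j => [[|[|//]] ?] /=;
 simpc; apply/eqP; rewrite eq_complex /=; apply/andP; split; apply/eqP; ring.
Qed.
End S.
Arguments sg {R}.

Section S.
Variable R : realType.
Local Notation C := R[i].
Local Notation Re := complex.Re.
Local Notation Im := complex.Im.
Lemma ReD (x y : C) : Re (x + y) = Re x + Re y. Proof. by case: x => a b; case: y => c d; simpc. Qed.
Lemma ImD (x y : C) : Im (x + y) = Im x + Im y. Proof. by case: x => a b; case: y => c d; simpc. Qed.
Lemma Re0 : Re (0 : C) = 0. Proof. by []. Qed.
Lemma Im0 : Im (0 : C) = 0. Proof. by []. Qed.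
Definition pm (x y : R * R) : R * R := (x.1 * y.1 - x.2 * y.2, x.1 * y.2 + x.2 * y.1).
Definition pc (x : C) : R * R := (Re x, Im x).
Definition pcj (x : C) : R * R := ((pc x).1, - (pc x).2).
Lemma pc_term (x y z w : C) : pc (x * y^* * z * w) = pm (pm (pm (pc x) (pcj y)) (pc z)) (pc w).
Proof. case: x => ? ?; case: y => ? ?; case: z => ? ?; case: w => ? ?; rewrite /pcj /pc /pm; simpc => /=; congr (_, _); ring. Qed.
Lemma dot3E (u v : 'rV[R]_3) : dot3 u v = u 0 0 * v 0 0 + u 0 1 * v 0 1 + u 0 2%:R * v 0 2%:R.
Proof. have e1 : (lift ord0 ord0 : 'I_3) = 1 by apply: val_inj.
have e2 : (lift ord0 (lift ord0 ord0) : 'I_3) = 2%:R by apply: val_inj.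
by rewrite /dot3 !big_ord_recl big_ord0 addr0 addrA e1 e2. Qed.
Local Notation l1 := (lift ord0 ord0 : 'I_2).
Lemma t00 : (ord0 == ord0 :> 'I_2) = true. Proof. by []. Qed.
Lemma t01 : (ord0 == l1) = false. Proof. by []. Qed.
Lemma t10 : (l1 == ord0) = false. Proof. by []. Qed.
Lemma t11 : (l1 == l1) = true. Proof. by []. Qed.
Definition tE := (t00, t01, t10, t11).
Lemma pc_eff (n : 'rV[R]_3) x (i j : 'I_2) : pc (effect n x i j) =
  (2^-1 * ((i==j)%:R + sg x * (if i==j then (if i==ord0 then n 0 2%:R else - n 0 2%:R) else n 0 0)),
   2^-1 * sg x * (if i==j then 0 else if i==ord0 then - n 0 1 else n 0 1)).
Proof. by rewrite /pc effectE. Qed.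
Definition psiw (w : 'rV[R]_3) : 'M[C]_2 := \matrix_(i, j)
  (if i == j then (if i == ord0 then Complex (w 0 1) (w 0 0) else Complex (w 0 1) (- w 0 0))
   else Complex 0 (- w 0 2%:R)).
Lemma pc_psi w (i j : 'I_2) : pc (psiw w i j) =
  (if i == j then w 0 1 else 0,
   if i == j then (if i == ord0 then w 0 0 else - w 0 0) else - w 0 2%:R).
Proof. by rewrite /pc mxE; case: (i == j); case: (i == ord0). Qed.
Definition Gp (M E F : 'M[C]_2) : C :=
  \sum_(i0 < 2) \sum_(i1 < 2) \sum_(j0 < 2) \sum_(j1 < 2)
    M i0 i1 * (M j0 j1)^* * E j0 i0 * F j1 i1.
Lemma ReGp M E F : Re (Gp M E F) = \sum_(i0 < 2) \sum_(i1 < 2) \sum_(j0 < 2) \sum_(j1 < 2)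
   (pm (pm (pm (pc (M i0 i1)) (pcj (M j0 j1))) (pc (E j0 i0))) (pc (F j1 i1))).1.
Proof.
rewrite /Gp (big_morph _ ReD Re0); apply: eq_bigr => ? _.
rewrite (big_morph _ ReD Re0); apply: eq_bigr => ? _.
rewrite (big_morph _ ReD Re0); apply: eq_bigr => ? _.
rewrite (big_morph _ ReD Re0); apply: eq_bigr => ? _.
by rewrite -pc_term.
Qed.
Lemma ImGp M E F : Im (Gp M E F) = \sum_(i0 < 2) \sum_(i1 < 2) \sum_(j0 < 2) \sum_(j1 < 2)
   (pm (pm (pm (pc (M i0 i1)) (pcj (M j0 j1))) (pc (E j0 i0))) (pc (F j1 i1))).2.
Proof.
rewrite /Gp (big_morph _ ImD Im0); apply: eq_bigr => ? _.
rewrite (big_morph _ ImD Im0); apply: eq_bigr => ? _.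
rewrite (big_morph _ ImD Im0); apply: eq_bigr => ? _.
rewrite (big_morph _ ImD Im0); apply: eq_bigr => ? _.
by rewrite -pc_term.
Qed.
Lemma eqC (x : C) r : Re x = r -> Im x = 0 -> x = r%:C.
Proof. by case: x => a b /= -> ->. Qed.
Lemma Gp_effect w n x y : Gp (psiw w) (effect n x) (effect n y) =
  (2^-1 * (dot3 w w - sg x * sg y * (2 * dot3 w n ^+2 - dot3 w w * dot3 n n)))%:C.
Proof.
apply: eqC; [rewrite ReGp | rewrite ImGp];
move: (pc_psi w) (pc_eff n x) (pc_eff n y);
generalize (psiw w) (effect n x) (effect n y) => M E F hM hE hF;
rewrite !big_ord_recl !big_ord0 /pcj !hM !hE !hF !tE /pm /= ?dot3E.
- field. all: try by rewrite ?pnatr_eq0.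
- ring.
Qed.
Lemma Gp_one w : Gp (psiw w) 1%:M 1%:M = (2 * dot3 w w)%:C.
Proof.
have h1 (i j : 'I_2) : pc ((1%:M : 'M[C]_2) i j) = ((i == j)%:R, 0).
  by rewrite /pc mxE; case: (i == j).
apply: eqC; [rewrite ReGp | rewrite ImGp];
move: (pc_psi w) h1; generalize (psiw w) (1%:M : 'M[C]_2) => M E hM hE;
rewrite !big_ord_recl !big_ord0 /pcj !hM !hE !tE /pm /= ?dot3E; field; by rewrite ?pnatr_eq0.
Qed.
End S.

Set Implicit Arguments. Unset Strict Implicit.
Arguments Gp {R}. Arguments psiw {R}.
Section S.
Variable R : realType.
Local Notation C := R[i].
Lemma swap22 (X : 'I_2 -> 'I_2 -> 'I_2 -> 'I_2 -> C) :
  \sum_(a < 2) \sum_(b < 2) \sum_(c < 2) \sum_(d < 2) X a b c d =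
  \sum_(c < 2) \sum_(d < 2) \sum_(a < 2) \sum_(b < 2) X a b c d.
Proof.
under eq_bigr => a _ do under eq_bigr => b _ do rewrite pair_big.
under [RHS]eq_bigr => c _ do under eq_bigr => d _ do rewrite pair_big.
rewrite [LHS]pair_big [RHS]pair_big /=.
exact: exchange_big.
Qed.
Lemma fact8 (f g : 'I_2 -> 'I_2 -> 'I_2 -> 'I_2 -> C) :
  \sum_(i0 < 2) \sum_(i1 < 2) \sum_(i2 < 2) \sum_(i3 < 2)
  \sum_(j0 < 2) \sum_(j1 < 2) \sum_(j2 < 2) \sum_(j3 < 2) f i0 i1 j0 j1 * g i2 i3 j2 j3 =
  (\sum_(i0 < 2) \sum_(i1 < 2) \sum_(j0 < 2) \sum_(j1 < 2) f i0 i1 j0 j1) *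
  (\sum_(i2 < 2) \sum_(i3 < 2) \sum_(j2 < 2) \sum_(j3 < 2) g i2 i3 j2 j3).
Proof.
under eq_bigr => i0 _ do under eq_bigr => i1 _ do
  rewrite (swap22 (fun i2 i3 j0 j1 => \sum_(j2 < 2) \sum_(j3 < 2) f i0 i1 j0 j1 * g i2 i3 j2 j3)).
rewrite mulr_suml; apply: eq_bigr => i0 _.
rewrite mulr_suml; apply: eq_bigr => i1 _.
rewrite mulr_suml; apply: eq_bigr => j0 _.
rewrite mulr_suml; apply: eq_bigr => j1 _.
rewrite mulr_sumr; apply: eq_bigr => i2 _.
rewrite mulr_sumr; apply: eq_bigr => i3 _.
rewrite mulr_sumr; apply: eq_bigr => j2 _.
by rewrite mulr_sumr.
Qed.
Lemma sum_tens m n (F : 'I_(m * n) -> C) :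
  \sum_(I < m * n) F I = \sum_(i < m) \sum_(j < n) F (@mxtens_index m n (i, j)).
Proof.
rewrite pair_big /= (reindex (@mxtens_index m n)) /=.
  by apply: eq_bigr => -[i j] _.
by exists (@mxtens_unindex m n) => k _; rewrite (mxtens_indexK, mxtens_unindexK).
Qed.
Definition idx4 (i0 i1 i2 i3 : 'I_2) : 'I_dim4 :=
  @mxtens_index 2 _ (i0, @mxtens_index 2 _ (i1, @mxtens_index 2 2 (i2, i3))).
Lemma sum16 (F : 'I_dim4 -> C) : \sum_(I < dim4) F I =
  \sum_(i0 < 2) \sum_(i1 < 2) \sum_(i2 < 2) \sum_(i3 < 2) F (idx4 i0 i1 i2 i3).
Proof.
rewrite /dim4 sum_tens; apply: eq_bigr => i0 _.
rewrite sum_tens; apply: eq_bigr => i1 _.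
by rewrite sum_tens.
Qed.
Definition Psi (M1 M2 : 'M[C]_2) (I : 'I_dim4) : C :=
  let p := @mxtens_unindex 2 (2 * (2 * 2)) I in
  let q := @mxtens_unindex 2 (2 * 2) p.2 in
  let r := @mxtens_unindex 2 2 q.2 in
  M1 p.1 q.1 * M2 r.1 r.2.
Lemma PsiE M1 M2 i0 i1 i2 i3 : Psi M1 M2 (idx4 i0 i1 i2 i3) = M1 i0 i1 * M2 i2 i3.
Proof. by rewrite /Psi /idx4 !mxtens_indexK. Qed.
Definition rho (lam : C) (M1 M2 : 'M[C]_2) : 'M[C]_dim4 :=
  \matrix_(I, J) (lam * Psi M1 M2 I * (Psi M1 M2 J)^*).
Lemma tr_rho lam M1 M2 (E0 E1 E2 E3 : 'M[C]_2) :
  \tr (rho lam M1 M2 *m (E0 *t (E1 *t (E2 *t E3)))) = lam * Gp M1 E0 E1 * Gp M2 E2 E3.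
Proof.
rewrite /mxtrace.
under eq_bigr => I _ do rewrite mxE.
rewrite sum16.
under eq_bigr => i0 _ do under eq_bigr => i1 _ do under eq_bigr => i2 _ do
  under eq_bigr => i3 _ do rewrite sum16.
rewrite /Gp -mulrA -fact8 mulr_sumr.
do 8 (apply: eq_bigr => ? _; rewrite ?mulr_sumr).
rewrite /rho !mxE !PsiE /idx4 !mxtens_indexK /= rmorphM.
ring.
Qed.
End S.

Set Implicit Arguments. Unset Strict Implicit.
Section S.
Variable R : realType.
Local Notation C := R[i].
Lemma tens1 m n : (1%:M : 'M[C]_m) *t (1%:M : 'M[C]_n) = 1%:M.
Proof.
apply/matrixP => i j; case: (@mxtens_indexP m n i) => i1 i2; case: (@mxtens_indexP m n j) => j1 j2.
rewrite tensmxE !mxE.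
have [e|ne] := eqVneq (@mxtens_index m n (i1, i2)) (mxtens_index (j1, j2)).
  move: (congr1 (@mxtens_unindex m n) e); rewrite !mxtens_indexK => -[-> ->].
  by rewrite !eqxx mulr1.
case: eqP => [e1|]; case: eqP => [e2|]; rewrite ?mulr0 ?mul0r //.
by move: ne; rewrite e1 e2 eqxx.
Qed.
Lemma conjcM' (x y : C) : conjc (x * y) = conjc x * conjc y.
Proof. by case: x => ? ?; case: y => ? ?; simpc. Qed.
Lemma conjcD' (x y : C) : conjc (x + y) = conjc x + conjc y.
Proof. by case: x => ? ?; case: y => ? ?; simpc. Qed.
Lemma conjcK' (x : C) : conjc (conjc x) = x.
Proof. by case: x => ? ?; simpc. Qed.
Lemma rho_psd (r : R) M1 M2 : 0 <= r -> psd (rho r%:C M1 M2).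
Proof.
move=> hr v.
set z := \sum_(I < dim4) conjc (v I 0) * Psi M1 M2 I.
have hz : conjc z = \sum_(J < dim4) v J 0 * conjc (Psi M1 M2 J).
  rewrite /z (big_morph _ conjcD' (conjc0 R)); apply: eq_bigr => J _.
  by rewrite conjcM' conjcK'.
have -> : (adjmx v *m rho r%:C M1 M2 *m v) 0 0 = r%:C * (z * conjc z).
  rewrite mxE; under eq_bigr => J _ do rewrite mxE mulr_suml.
  rewrite exchange_big hz /z mulr_suml mulr_sumr.
  apply: eq_bigr => I _; rewrite mulr_sumr mulr_sumr; apply: eq_bigr => J _.
  rewrite /adjmx /rho !mxE; ring.
by apply: mulr_ge0; [rewrite ler0c | exact: mulcJ_ge0].
Qed.
Lemma sgM (x y : 'I_2) : sg x * sg y = (if x == y then 1 else -1 : R).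
Proof. by rewrite /sg; case: x => [[|[|//]] ?]; case: y => [[|[|//]] ?] /=; ring. Qed.
End S.

Set Implicit Arguments. Unset Strict Implicit.
Section S.
Variable R : realType.
Local Notation C := R[i].
Definition mk4 (x0 x1 x2 x3 : 'I_2) : outcome4 :=
  [ffun k : 'I_4 => if k == 0 then x0 else if k == 1 then x1 else if k == 2%:R then x2 else x3].
Lemma mk4E0 x0 x1 x2 x3 : mk4 x0 x1 x2 x3 0 = x0. Proof. by rewrite ffunE. Qed.
Lemma mk4E1 x0 x1 x2 x3 : mk4 x0 x1 x2 x3 1 = x1. Proof. by rewrite ffunE. Qed.
Lemma mk4E2 x0 x1 x2 x3 : mk4 x0 x1 x2 x3 2%:R = x2. Proof. by rewrite ffunE. Qed.
Lemma mk4E3 x0 x1 x2 x3 : mk4 x0 x1 x2 x3 3%:R = x3. Proof. by rewrite ffunE. Qed.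
Definition mk4E := (mk4E0, mk4E1, mk4E2, mk4E3).
Lemma ord4 (k : 'I_4) : k = 0 \/ k = 1 \/ k = 2%:R \/ k = 3%:R.
Proof.
case: k => [[|[|[|[|//]]]] Hk];
  [left|right; left|right; right; left|right; right; right]; exact: val_inj.
Qed.
Lemma mk4K (w : outcome4) : mk4 (w 0) (w 1) (w 2%:R) (w 3%:R) = w.
Proof. by apply/ffunP => k; case: (ord4 k) => [->|[->|[->|->]]]; rewrite mk4E. Qed.
Lemma sum_out (F : outcome4 -> C) : \sum_w F w =
  \sum_(x0 < 2) \sum_(x1 < 2) \sum_(x2 < 2) \sum_(x3 < 2) F (mk4 x0 x1 x2 x3).
Proof.
rewrite [RHS]pair_big [RHS]pair_big [RHS]pair_big /=.
rewrite (reindex (fun p : 'I_2 * 'I_2 * 'I_2 * 'I_2 => mk4 p.1.1.1 p.1.1.2 p.1.2 p.2)) //=.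
exists (fun w : outcome4 => (w 0, w 1, w 2%:R, w 3%:R)) => [p _|w _].
  by case: p => [[[? ?] ?] ?]; rewrite /= !mk4E.
by rewrite mk4K.
Qed.
Lemma dotC (u v : 'rV[R]_3) : dot3 u v = dot3 v u.
Proof. by rewrite !dot3E; ring. Qed.
Lemma dotBl (u v x : 'rV[R]_3) k : dot3 (u - k *: v) x = dot3 u x - k * dot3 v x.
Proof. by rewrite !dot3E !mxE; ring. Qed.
Lemma dotBr (u v x : 'rV[R]_3) k : dot3 x (u - k *: v) = dot3 x u - k * dot3 x v.
Proof. by rewrite !dot3E !mxE; ring. Qed.
Lemma dot_ge0 (u : 'rV[R]_3) : 0 <= dot3 u u.
Proof. by rewrite /dot3; apply: sumr_ge0 => k _; rewrite -expr2 sqr_ge0. Qed.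
Lemma dot_eq0 (u : 'rV[R]_3) : dot3 u u = 0 -> u = 0.
Proof.
rewrite /dot3 => /psumr_eq0P h; apply/matrixP => i j; rewrite (ord1 i) mxE.
have /eqP := h (fun k _ => ltac:(by rewrite -expr2 sqr_ge0)) j isT.
by rewrite mulf_eq0 orbb => /eqP.
Qed.
Lemma probE n (M1 M2 : 'M[C]_2) lam w : prob n (rho lam M1 M2) w =
  lam * Gp M1 (effect n (w 0)) (effect n (w 1)) * Gp M2 (effect n (w 2%:R)) (effect n (w 3%:R)).
Proof. by rewrite /prob /effect4 tr_rho. Qed.
Lemma sum16R (F : 'I_2 -> 'I_2 -> 'I_2 -> 'I_2 -> R) :
  \sum_(x0 < 2) \sum_(x1 < 2) \sum_(x2 < 2) \sum_(x3 < 2) (F x0 x1 x2 x3)%:C =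
  (\sum_(x0 < 2) \sum_(x1 < 2) \sum_(x2 < 2) \sum_(x3 < 2) F x0 x1 x2 x3)%:C.
Proof. by rewrite !rmorph_sum; do 3 (apply: eq_bigr => ? _; rewrite !rmorph_sum). Qed.
End S.

Unset Implicit Arguments. Set Strict Implicit.

Theorem proposition6 (R : realType) (a b : 'rV[R]_3) :
  unit3 a -> unit3 b -> a != b -> a != - b ->
  exists (rho : 'M[R[i]]_dim4) (RA RB RQ : {set outcome4}),
    [/\ density4 rho,
        [/\ [disjoint RA & RB], [disjoint RA & RQ], [disjoint RB & RQ]
          & RA :|: RB :|: RQ = [set: outcome4]],
        [/\ swap_invariant RA, swap_invariant RB & swap_invariant RQ],
        (forall w, w \in RA -> prob b rho w = 0) /\
        (forall w, w \in RB -> prob a rho w = 0) &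
        (forall eta : R, 0 <= eta <= 1 ->
           (eta%:C * probset a rho RA + (1 - eta)%:C * probset b rho RB)
             >= ((sin (angle3 a b)) ^+ 2)%:C)].
Proof.
move=> ha hb nab namb; rewrite /unit3 in ha hb.
move cE : (dot3 a b) => c.
have hba : dot3 b a = c by rewrite dotC.
pose t := 1 - c ^+ 2.
pose w1 := b - c *: a. pose w2 := a - c *: b.
have d11 : dot3 w1 w1 = t by rewrite /w1 dotBl !dotBr ha hb hba cE /t; ring.
have d1a : dot3 w1 a = 0 by rewrite /w1 dotBl ha hba; ring.
have d1b : dot3 w1 b = t by rewrite /w1 dotBl hb cE /t; ring.
have d22 : dot3 w2 w2 = t by rewrite /w2 dotBl !dotBr ha hb hba cE /t; ring.
have d2b : dot3 w2 b = 0 by rewrite /w2 dotBl hb cE; ring.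
have d2a : dot3 w2 a = t by rewrite /w2 dotBl ha hba /t; ring.
have t_ge0 : 0 <= t by rewrite -d11 dot_ge0.
have tn0 : t != 0.
  apply/eqP => t0.
  have : dot3 w1 w1 = 0 by rewrite d11 t0.
  move/dot_eq0/eqP; rewrite subr_eq0 => /eqP bE.
  have : c ^+ 2 == 1 by move: t0; rewrite /t => /eqP; rewrite subr_eq0 eq_sym.
  rewrite sqrf_eq1 => /orP [/eqP c1 | /eqP cm1].
    by move: nab; rewrite bE c1 scale1r eqxx.
  by move: namb; rewrite bE cm1 scaleN1r opprK eqxx.
have GA1 x y : Gp (psiw w1) (effect a x) (effect a y) = (2^-1 * t * (1 + sg x * sg y))%:C.
  by rewrite Gp_effect d11 d1a ha; congr (_%:C); ring.
have GB1 x y : Gp (psiw w1) (effect b x) (effect b y) =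
    (2^-1 * (t - sg x * sg y * (2 * t ^+ 2 - t)))%:C.
  by rewrite Gp_effect d11 d1b hb; congr (_%:C); ring.
have GB2 x y : Gp (psiw w2) (effect b x) (effect b y) = (2^-1 * t * (1 + sg x * sg y))%:C.
  by rewrite Gp_effect d22 d2b hb; congr (_%:C); ring.
have GA2 x y : Gp (psiw w2) (effect a x) (effect a y) =
    (2^-1 * (t - sg x * sg y * (2 * t ^+ 2 - t)))%:C.
  by rewrite Gp_effect d22 d2a ha; congr (_%:C); ring.
pose r := (4 * t ^+ 2)^-1.
pose RA := [set w : outcome4 | (w 0 == w 1) && (w 2%:R != w 3%:R)].
pose RB := [set w : outcome4 | (w 0 != w 1) && (w 2%:R == w 3%:R)].
exists (rho r%:C (psiw w1) (psiw w2)), RA, RB, (~: (RA :|: RB)).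
split.
- split.
    by apply: rho_psd; rewrite invr_ge0 mulr_ge0 ?sqr_ge0.
  have -> : \tr (rho r%:C (psiw w1) (psiw w2)) =
      \tr (rho r%:C (psiw w1) (psiw w2) *m (1%:M *t (1%:M *t (1%:M *t 1%:M)))).
    by rewrite !tens1 mulmx1.
  rewrite tr_rho !Gp_one d11 d22 -!rmorphM.
  have -> : r * (2 * t) * (2 * t) = 1 by rewrite /r; field.
  by rewrite rmorph1.
- split.
  + rewrite -setI_eq0; apply/eqP/setP => w; rewrite !inE.
    by case: (w 0 == w 1); rewrite ?andbF.
  + rewrite -setI_eq0; apply/eqP/setP => w; rewrite !inE.
    by case: (w 0 == w 1); case: (w 2%:R == w 3%:R).
  + rewrite -setI_eq0; apply/eqP/setP => w; rewrite !inE.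
    by case: (w 0 == w 1); case: (w 2%:R == w 3%:R).
  + by rewrite setUCr.
- by split => w; rewrite /swap4 !inE !ffunE !(inj_eq rev_ord_inj).
- split => w; rewrite inE => /andP [e ne].
    by rewrite probE GB2 sgM (negbTE ne) addrN mulr0 ?rmorph0 mulr0.
  by rewrite probE GA1 sgM (negbTE e) addrN mulr0 ?rmorph0 mulr0 mul0r.
- move=> eta _.
  have PA : probset a (rho r%:C (psiw w1) (psiw w2)) RA = t%:C.
    rewrite /probset big_mkcond sum_out.
    transitivity (\sum_(x0 < 2) \sum_(x1 < 2) \sum_(x2 < 2) \sum_(x3 < 2)
        (if (x0 == x1) && (x2 != x3) then t / 4%:R else 0)%:C).
      do 4 (apply: eq_bigr => ? _).
      rewrite inE !mk4E; case: ifP => [/andP [/eqP <- ne] | _]; last by rewrite rmorph0.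
      rewrite probE !mk4E GA1 GA2 !sgM eqxx (negbTE ne) -!rmorphM; congr (_%:C).
      by rewrite /r; field.
    rewrite sum16R !big_ord_recl !big_ord0 !tE /=; congr (_%:C); by field.
  have PB : probset b (rho r%:C (psiw w1) (psiw w2)) RB = t%:C.
    rewrite /probset big_mkcond sum_out.
    transitivity (\sum_(x0 < 2) \sum_(x1 < 2) \sum_(x2 < 2) \sum_(x3 < 2)
        (if (x0 != x1) && (x2 == x3) then t / 4%:R else 0)%:C).
      do 4 (apply: eq_bigr => ? _).
      rewrite inE !mk4E; case: ifP => [/andP [ne /eqP <-] | _]; last by rewrite rmorph0.
      rewrite probE !mk4E GB1 GB2 !sgM eqxx (negbTE ne) -!rmorphM; congr (_%:C).
      by rewrite /r; field.
    rewrite sum16R !big_ord_recl !big_ord0 !tE /=; congr (_%:C); by field.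
  have hc : -1 <= c <= 1.
    have h2 : 0 <= 1 - c ^+ 2 by [].
    by apply/andP; split; nra.
  have hsin : sin (angle3 a b) ^+ 2 = t.
    by rewrite /angle3 cE sin2cos2 acosK // in_itv /=.
  rewrite PA PB hsin -!rmorphM -rmorphD lecR.
  have -> : eta * t + (1 - eta) * t = t by ring.
  by [].
Qed.
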